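(* Let $p,q\ge 1$ be integers, $C$ a finite set, and $M\in\mathcal M(p,q,C)$. Let $\gamma\in C$ be a colour of frequency $l$ in $M$. Then: (1) $l\le\min(p,q)$; (2) $\operatorname{exc}(\gamma)\ge 0$; (3) if $l=\operatorname{frq}(M)$, then $|C|\le\lfloor pq/l\rfloor$.
   Context: $\mathcal M(p,q,C)$ is the set of $p\times q$ matrices $M$ with entries from $C$ such that each row of $M$ has $q$ pairwise distinct entries, each column has $p$ pairwise distinct entries, and every pair $\{\alpha,\beta\}$ of distinct colours of $C$ is good: there is a row or a column of $M$ containing both $\alpha$ and $\beta$. The frequency $\operatorname{frq}(\gamma)$ of $\gamma\in C$ is the number of entries of $M$ equal to $\gamma$, and $\operatorname{frq}(M)$ is the minimum frequency over all colours of $C$. The excess of a colour $\gamma$ of frequency $l$ is $\operatorname{exc}(\gamma)=l(p+q-l-1)-(|C|-1)$. *)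

(* Defs.v *)
From mathcomp Require Import all_boot all_order all_algebra.
Set Implicit Arguments. Unset Strict Implicit. Unset Printing Implicit Defensive.

Definition rows_distinct (C : finType) p q (M : 'M[C]_(p, q)) : Prop :=
  forall i : 'I_p, injective (fun j : 'I_q => M i j).

Definition cols_distinct (C : finType) p q (M : 'M[C]_(p, q)) : Prop :=
  forall j : 'I_q, injective (fun i : 'I_p => M i j).

Definition good_pair (C : finType) p q (M : 'M[C]_(p, q)) (a b : C) : Prop :=
  (exists i : 'I_p, (exists j : 'I_q, M i j = a) /\ (exists j : 'I_q, M i j = b)) \/
  (exists j : 'I_q, (exists i : 'I_p, M i j = a) /\ (exists i : 'I_p, M i j = b)).

Definition inMpqC (C : finType) p q (M : 'M[C]_(p, q)) : Prop :=
  rows_distinct M /\ cols_distinct M /\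
  (forall a b : C, a <> b -> good_pair M a b).

Definition frq (C : finType) p q (M : 'M[C]_(p, q)) (g : C) : nat :=
  #|[set ij : 'I_p * 'I_q | M ij.1 ij.2 == g]|.

(* frq(M): minimum frequency over all colours of C
   (the neutral element p*q is irrelevant, since every frequency is <= p*q
   and C is nonempty whenever p,q >= 1) *)
Definition frqM (C : finType) p q (M : 'M[C]_(p, q)) : nat :=
  \big[minn/(p * q)%N]_(c : C) frq M c.

Definition exc (C : finType) p q (M : 'M[C]_(p, q)) (g : C) : int :=
  let l := frq M g in
  ((l%:Z * (p%:Z + q%:Z - l%:Z - 1) - (#|C|%:Z - 1))%R).

(* Main.v *)
Require Import Defs.
From mathcomp Require Import all_boot all_order all_algebra.
From mathcomp Require Import zify.

Lemma bigminn_le (T : eqType) (s : seq T) (x : nat) (F : T -> nat) (c : T) :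
  c \in s -> (\big[minn/x]_(i <- s) F i <= F c)%N.
Proof.
elim: s => [|a s IH] //=; rewrite in_cons big_cons => /orP [/eqP ->|/IH h].
  exact: geq_minl.
exact: leq_trans (geq_minr _ _) h.
Qed.

Lemma sum_frq (C : finType) p q (M : 'M[C]_(p, q)) :
  (\sum_(c : C) frq M c = p * q)%N.
Proof.
rewrite /frq.
under eq_bigr => c _ do rewrite -sum1dep_card big_mkcond /=.
rewrite exchange_big /=.
under eq_bigr => ij _ do rewrite -big_mkcond /= (big_pred1 (M ij.1 ij.2)) //.
by rewrite sum1_card card_prod !card_ord.
Qed.

Theorem lemma1 (p q : nat) (C : finType) (M : 'M[C]_(p, q)) (g : C) :
  (1 <= p)%N -> (1 <= q)%N -> inMpqC M ->
  [/\ (frq M g <= minn p q)%N,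
      (0 <= exc M g)%R
    & frq M g = frqM M -> (#|C| <= (p * q) %/ frq M g)%N].
Proof.
move=> hp hq [hr [hc hg]].
set G := [set ij : 'I_p * 'I_q | M ij.1 ij.2 == g].
have hl : frq M g = #|G| by [].
set R := [set ij.1 | ij in G].
set K := [set ij.2 | ij in G].
have hR : #|R| = #|G|.
  apply: card_in_imset => [[i j] [i' j']]; rewrite !inE /= => /eqP h1 /eqP h2 ei.
  subst i'; congr pair; apply: (hr i); by rewrite /= h1 h2.
have hK : #|K| = #|G|.
  apply: card_in_imset => [[i j] [i' j']]; rewrite !inE /= => /eqP h1 /eqP h2 ej.
  subst j'; congr pair; apply: (hc j); by rewrite /= h1 h2.
have lp : (#|G| <= p)%N by rewrite -hR -[X in (_ <= X)%N](card_ord p) max_card.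
have lq : (#|G| <= q)%N by rewrite -hK -[X in (_ <= X)%N](card_ord q) max_card.
split.
- by rewrite hl leq_min lp lq.
- set U := [set ij : 'I_p * 'I_q | (ij.1 \in R) || (ij.2 \in K)].
  have hUc : ~: U = setX (~: R) (~: K).
    by apply/setP => -[i j]; rewrite !inE negb_or.
  have hU : (#|U| + (p - #|G|) * (q - #|G|) = p * q)%N.
    have := cardsC U; rewrite hUc cardsX card_prod !card_ord.
    have := cardsC R; have := cardsC K; rewrite !card_ord hR hK.
    move=> h1 h2; nia.
  have GU : G \subset U.
    apply/subsetP => -[i j] hij; rewrite inE /=; apply/orP; left.
    by apply/imsetP; exists (i, j).
  have hS : (#|U :\: G| + #|G| = #|U|)%N.
    by rewrite -(cardsID G U) (setIidPr GU) addnC.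
  have hCS : (#|C| - 1 <= #|U :\: G|)%N.
    have -> : (#|C| - 1 = #|[set: C] :\ g|)%N.
      by rewrite -cardsT (cardsD1 g [set: C]) inE add1n subn1.
    apply: leq_trans (leq_imset_card (fun ij : 'I_p * 'I_q => M ij.1 ij.2) _).
    apply: subset_leq_card; apply/subsetP => a; rewrite !inE andbT => ag.
    have [[i [[j hj] [j' hj']]]|[j [[i hi] [i' hi']]]] := hg a g (elimN eqP ag).
    + apply/imsetP; exists (i, j) => //=.
      rewrite !inE /= hj ag /=; apply/orP; left; apply/imsetP; exists (i, j').
        by rewrite inE /= hj'.
      by [].
    + apply/imsetP; exists (i, j) => //=.
      rewrite !inE /= hi ag /=; apply/orP; right; apply/imsetP; exists (i', j).
        by rewrite inE /= hi'.
      by [].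
  have hC : (0 < #|C|)%N by apply/card_gt0P; exists g.
  rewrite /exc hl.
  move: hU hS hCS hC lp lq; set l := #|G|; set u := #|U|; set s := #|U :\: G|.
  move=> *; nia.
- move=> hmin.
  have l0 : (0 < #|G|)%N.
    apply/card_gt0P.
    pose i0 : 'I_p := Ordinal hp; pose j0 : 'I_q := Ordinal hq.
    have [e|ne] := eqVneq (M i0 j0) g.
      by exists (i0, j0); rewrite inE /= e.
    have [[i [_ [j hj]]]|[j [_ [i hi]]]] := hg _ _ (elimN eqP ne).
      by exists (i, j); rewrite inE /= hj.
    by exists (i, j); rewrite inE /= hi.
  rewrite -hl in l0 *; rewrite leq_divRL // -(@sum_frq C p q M) -sum_nat_const.
  apply: leq_sum => c _; rewrite hmin /frqM; apply: bigminn_le.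
  exact: mem_index_enum.
Qed.
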